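(* For every finite simple graph $G$ and every positive integer $n$, $$\chi_i(G)\le \chi_i(S_G^n)\le \chi_i(G)+1.$$ Moreover, both bounds are attained: there exist graphs $G$ (e.g. $G=K_p$ with $p\ge 3$, or $G=C_k$ with $k\ge 3$, $k\not\equiv 0\pmod 4$) with $\chi_i(S_G^n)=\chi_i(G)$ for all $n\ge 1$, and there exist graphs $G$ (e.g. $G=C_k$ with $k\equiv 0\pmod 4$) with $\chi_i(S_G^n)=\chi_i(G)+1$ for all $n\ge 2$.
   Context: For a graph $H$, an injective $k$-coloring is a map $f:V(H)\to\{1,\dots,k\}$ such that any two distinct vertices $u,w$ with $f(u)=f(w)$ have no common neighbor; $\chi_i(H)$ is the least such $k$. For a graph $G$ and positive integer $n$, the generalized Sierpiński graph $S_G^n$ has vertex set $V(G)^n$, and $(u_1,\dots,u_n)$, $(v_1,\dots,v_n)$ are adjacent if and only if there is $d\in\{1,\dots,n\}$ with $u_i=v_i$ for $i<d$, $u_dv_d\in E(G)$, and $u_i=v_d$, $v_i=u_d$ for all $i>d$. $K_p$ is the complete graph on $p$ vertices and $C_k$ the cycle on $k$ vertices. *)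

(* Defs.v *)
From mathcomp Require Import all_boot.
Set Implicit Arguments. Unset Strict Implicit. Unset Printing Implicit Defensive.

(* A graph on a finite vertex type T is given by an adjacency relation e;
   a finite simple graph is one with e symmetric and irreflexive. *)

Definition inj_col (T : finType) (e : rel T) (k : nat) (f : T -> 'I_k) : bool :=
  [forall u, forall w,
     ((u != w) && (f u == f w)) ==> ~~ [exists x, e u x && e w x]].

Definition has_inj_col (T : finType) (e : rel T) (k : nat) : bool :=
  [exists f : {ffun T -> 'I_k}, inj_col e f].

Lemma has_inj_col_ex (T : finType) (e : rel T) : exists k, has_inj_col e k.
Proof.
exists #|T|; apply/existsP; exists (finfun (@enum_rank T)).
apply/forallP => u; apply/forallP => w; apply/implyP => /andP [ne eq].
rewrite !ffunE in eq.
by move: ne; rewrite (enum_rank_inj (eqP eq)) eqxx.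
Qed.

Definition chi_i (T : finType) (e : rel T) : nat := ex_minn (has_inj_col_ex e).

Definition sierp (T : finType) (e : rel T) (n : nat) : rel {ffun 'I_n -> T} :=
  fun u v => [exists d : 'I_n,
    [&& [forall i : 'I_n, (i < d) ==> (u i == v i)],
        e (u d) (v d) &
        [forall i : 'I_n, (d < i) ==> ((u i == v d) && (v i == u d))]]].

Definition complete_g (p : nat) : rel 'I_p := fun i j => i != j.

Definition cycle_g (k : nat) : rel 'I_k :=
  fun i j => (val j == (val i).+1 %% k) || (val i == (val j).+1 %% k).
Arguments sierp {T} e n.
Arguments complete_g p : clear implicits.
Arguments cycle_g k : clear implicits.

(* Main.v *)
Require Import Defs.
From mathcomp Require Import all_boot zify.
Set Implicit Arguments. Unset Strict Implicit. Unset Printing Implicit Defensive.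

Section Gen.
Variable T : finType.
Variable e : rel T.

Lemma chi_i_le k : has_inj_col e k -> chi_i e <= k.
Proof. rewrite /chi_i; case: ex_minnP => k0 _ H; exact: H. Qed.

Lemma chi_i_has : has_inj_col e (chi_i e).
Proof. rewrite /chi_i; by case: ex_minnP. Qed.

Lemma has_colP k : has_inj_col e k -> exists f : T -> 'I_k, inj_col e f.
Proof. by case/existsP => f Hf; exists f. Qed.

Lemma colP_has k (f : T -> 'I_k) : inj_col e f -> has_inj_col e k.
Proof.
move=> H; apply/existsP; exists (finfun f).
apply/forallP => u; apply/forallP => w; rewrite !ffunE.
exact: (forallP (forallP H u) w).
Qed.

Lemma injP k (f : T -> 'I_k) u w x : inj_col e f -> u != w -> e u x -> e w x -> f u != f w.
Proof.
move=> H uw ux wx; apply/negP => fe.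
have := implyP (forallP (forallP H u) w); rewrite uw fe => /(_ isT) /negP; apply.
by apply/existsP; exists x; rewrite ux wx.
Qed.

Lemma injI k (f : T -> 'I_k) :
  (forall u w x, u != w -> e u x -> e w x -> f u != f w) -> inj_col e f.
Proof.
move=> H; apply/forallP => u; apply/forallP => w; apply/implyP => /andP [uw fe].
apply/negP => /existsP [x /andP [ux wx]].
by move: (H u w x uw ux wx); rewrite fe.
Qed.

End Gen.

Lemma chi_i_transfer (T T' : finType) (e : rel T) (e' : rel T') (phi : T -> T') :
  injective phi -> (forall x y, e x y -> e' (phi x) (phi y)) -> chi_i e <= chi_i e'.
Proof.
move=> phiI phiE; have [g Hg] := has_colP (chi_i_has e').
apply: chi_i_le; apply: (@colP_has _ _ _ (fun x => g (phi x))); apply: injI => u w x uw ux wx.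
apply: (injP Hg _ (phiE _ _ ux) (phiE _ _ wx)).
by apply: contra uw => /eqP /phiI ->.
Qed.

Section Sierp.
Variable T : finType.
Variable e : rel T.
Hypothesis esym : symmetric e.
Hypothesis eirr : irreflexive e.
Variable m : nat.
Notation V := {ffun 'I_m.+1 -> T}.
Notation L := (@ord_max m).

Definition internal (u z : V) :=
  (forall i : 'I_m.+1, i != L -> u i = z i) /\ e (u L) (z L).
Definition external (u z : V) (d : 'I_m.+1) :=
  [/\ d < m, (forall i : 'I_m.+1, i < d -> u i = z i), e (u d) (z d) &
      (forall i : 'I_m.+1, d < i -> u i = z d /\ z i = u d)].

Lemma sierpP u z : sierp e m.+1 u z -> internal u z \/ exists d, external u z d.
Proof.
case/existsP => d /and3P [/forallP H1 He /forallP H2].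
case: (ltnP d m) => dm.
  right; exists d; split => // i.
  - by move=> id; apply/eqP; exact: (implyP (H1 i) id).
  - by move=> id; have /andP [/eqP a /eqP b] := implyP (H2 i) id.
left; have dL : d = L by apply/val_inj => /=; have := ltn_ord d; lia.
subst d; split => // i iL; apply/eqP; apply: (implyP (H1 i)).
by have := ltn_ord i; move: iL; rewrite -val_eqE /=; lia.
Qed.

Lemma ext_unique u v z d d' : external u z d -> external v z d' -> u = v.
Proof.
have key : forall u v d d', external u z d -> external v z d' -> d < d' -> False.
  move=> u1 v1 d1 d1' [h1 h2 h3 h4] [g1 g2 g3 g4] lt.
  have l2 : d1'.+1 < m.+1 by lia.
  have [a1 _] := h4 d1' lt.
  have [_ b1] := h4 (Ordinal l2) (ltn_trans lt (ltnSn _)).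
  have [_ c1] := g4 (Ordinal l2) (ltnSn _).
  move: g3; rewrite -c1 b1 -(proj2 (h4 d1' lt)).
  by rewrite eirr.
move=> Hu Hv.
have dd : d = d'.
  apply/val_inj; case: (ltngtP d d') => // lt; first by case: (key _ _ _ _ Hu Hv lt).
  by case: (key _ _ _ _ Hv Hu lt).
subst d'; case: Hu => [h1 h2 h3 h4]; case: Hv => [g1 g2 g3 g4].
apply/ffunP => i; case: (ltngtP i d) => id.
- by rewrite h2 // g2.
- by rewrite (proj1 (h4 i id)) (proj1 (g4 i id)).
- have l2 : d.+1 < m.+1 by lia.
  have -> : i = d by apply/val_inj.
  by rewrite -(proj2 (h4 (Ordinal l2) (ltnSn _))) (proj2 (g4 (Ordinal l2) (ltnSn _))).
Qed.

Lemma sierp_col K (c : V -> 'I_K) :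
  (forall z u v, u != v -> internal u z -> internal v z -> c u != c v) ->
  (forall z u v d, external u z d -> internal v z -> c u != c v) ->
  inj_col (sierp e m.+1) c.
Proof.
move=> H1 H2; apply: injI => u w x uw ux wx.
case: (sierpP ux) => [iu | [d eu]]; case: (sierpP wx) => [iw | [d' ew]].
- exact: H1 iu iw.
- by rewrite eq_sym; apply: H2 ew iu.
- exact: H2 eu iw.
- by move: uw; rewrite (ext_unique eu ew) eqxx.
Qed.

End Sierp.

Section C2.
Variable T : finType.
Variable e : rel T.
Hypothesis esym : symmetric e.
Hypothesis eirr : irreflexive e.
Variable m : nat.
Notation V := {ffun 'I_m.+1 -> T}.
Notation L := (@ord_max m).

Lemma internal_neq (u v z : V) : u != v -> internal e u z -> internal e v z ->
  (forall i, i != L -> u i = v i) /\ u L != v L.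
Proof.
move=> uv [iu eu] [iv ev]; split=> [i iL|]; first by rewrite iu // iv.
apply: contra uv => /eqP h; apply/eqP/ffunP => i; case: (eqVneq i L) => [->//|iL].
by rewrite iu // iv.
Qed.

Lemma c2_col K (f : T -> 'I_K) (c2 : T -> T -> 'I_K) :
  inj_col e f ->
  (forall a b b' t, b != b' -> e b t -> e b' t -> c2 a b != c2 a b') ->
  (forall x y w, e x y -> e y w -> c2 y x != c2 x w) ->
  (forall x y w, e x y -> e y w -> c2 x x != c2 y w) ->
  inj_col (sierp e m.+1)
    (fun u : V => if 0 < m then c2 (u (inord m.-1)) (u L) else f (u L)).
Proof.
move=> Hf C1 C2 C3; apply: sierp_col => // [z u v uv iu iv | z u v d [dm h2 h3 h4] [iv ev]].
  have [same uL] := internal_neq uv iu iv.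
  case: ifP => m0.
    have ll : (inord m.-1 : 'I_m.+1) != L.
      by rewrite -val_eqE /= inordK; lia.
    rewrite same //; apply: (C1 _ _ _ (z L) uL); [exact: iu.2 | exact: iv.2].
  exact: injP Hf uL iu.2 iv.2.
have m0 : 0 < m by lia.
rewrite m0.
have ll : (inord m.-1 : 'I_m.+1) != L by rewrite -val_eqE /= inordK; lia.
rewrite (iv _ ll).
have dL : d < L by rewrite /=; lia.
have [uL zL] := h4 _ dL.
rewrite uL; move: ev; rewrite zL => ev.
case: (ltnP d m.-1) => dl.
  have dl' : d < (inord m.-1 : 'I_m.+1) by rewrite inordK; lia.
  have [ul zl] := h4 _ dl'.
  rewrite ul zl; apply: C3; first by rewrite esym.
  by rewrite esym.
have -> : (inord m.-1 : 'I_m.+1) = d by apply/val_inj; rewrite /= inordK; lia.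
apply: C2; first by rewrite esym.
by rewrite esym.
Qed.

End C2.

Lemma widen_neq k (x : 'I_k) : widen_ord (leqnSn k) x != ord_max.
Proof. by rewrite -val_eqE /= neq_ltn ltn_ord. Qed.

Lemma widen_eq k (x y : 'I_k) : (widen_ord (leqnSn k) x == widen_ord (leqnSn k) y) = (x == y).
Proof. by rewrite -!val_eqE. Qed.

Lemma part1_upper (T : finType) (e : rel T) (esym : symmetric e) (eirr : irreflexive e) m :
  chi_i (sierp e m.+1) <= (chi_i e).+1.
Proof.
have [f Hf] := has_colP (chi_i_has e).
set k := chi_i e in f Hf *.
pose c2 (a b : T) : 'I_k.+1 := if a == b then ord_max else widen_ord (leqnSn k) (f b).
have C1 : forall a b b' t, b != b' -> e b t -> e b' t -> c2 a b != c2 a b'.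
  move=> a b b' t bb' bt b't; rewrite /c2.
  case: (eqVneq a b) => [eab|ab]; first by rewrite eab (negbTE bb') eq_sym widen_neq.
  case: (eqVneq a b') => [_|ab']; first by rewrite widen_neq.
  by rewrite widen_eq; exact: injP Hf bb' bt b't.
have C2 : forall x y w, e x y -> e y w -> c2 y x != c2 x w.
  move=> x y w xy yw; rewrite /c2.
  have -> : (y == x) = false by apply/negP => /eqP yx; move: xy; rewrite yx eirr.
  case: (eqVneq x w) => [_|xw]; first by rewrite widen_neq.
  rewrite widen_eq eq_sym; apply: (injP Hf (x := y)); [by rewrite eq_sym | by rewrite esym | by []].
have C3 : forall x y w, e x y -> e y w -> c2 x x != c2 y w.
  move=> x y w xy yw; rewrite /c2 eqxx.
  have -> : (y == w) = false by apply/negP => /eqP yx; move: yw; rewrite yx eirr.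
  by rewrite eq_sym widen_neq.
have Hf' : inj_col e (fun x => widen_ord (leqnSn k) (f x)).
  by apply: injI => u w x uw ux wx; rewrite widen_eq; exact: injP Hf uw ux wx.
have H := c2_col esym eirr m Hf' C1 C2 C3.
apply: chi_i_le; exact: colP_has H.
Qed.

Lemma part1_lower (T : finType) (e : rel T) m : chi_i e <= chi_i (sierp e m.+1).
Proof.
case: (pickP (fun _ : T => true)) => [c0 _ | T0].
  pose phi (x : T) : {ffun 'I_m.+1 -> T} := [ffun i => if i == ord_max then x else c0].
  apply: (@chi_i_transfer _ _ _ _ phi).
    by move=> x y h; have := congr1 (fun g : {ffun 'I_m.+1 -> T} => g ord_max) h; rewrite !ffunE eqxx.
  move=> x y xy; apply/existsP; exists ord_max; rewrite !ffunE eqxx xy /=.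
  apply/andP; split; apply/forallP => i; apply/implyP => iL.
    have iL' : (i == ord_max) = false by apply/eqP => h; rewrite h ltnn in iL.
    by rewrite !ffunE iL'.
  by have := ltn_ord i; move: iL => /= ; lia.
have f : T -> 'I_0 by move=> x; move: (T0 x).
have -> : chi_i e = 0.
  apply/eqP; rewrite -leqn0; apply: chi_i_le; apply: (colP_has (f := f)).
  by apply: injI => u; move: (T0 u).
by [].
Qed.

Lemma sum_split n (F : 'I_n -> nat) (d : 'I_n) :
  \sum_(i < n) F i = \sum_(i < n | i < d) F i + F d + \sum_(i < n | d < i) F i.
Proof.
rewrite (bigD1 d) //= (bigID (fun i : 'I_n => i < d)) /= addnA [F d + _]addnC.
congr (_ + _ + _); apply: eq_bigl => i; rewrite -val_eqE /=; case: ltngtP => //.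
Qed.

Section Kp.
Variable p : nat.
Hypothesis p0 : 0 < p.
Variable e : rel 'I_p.
Hypothesis eE : forall i j, e i j = (i != j).
Variable m : nat.
Notation V := {ffun 'I_m.+1 -> 'I_p}.
Notation L := (@ord_max m).

Definition wt (i : nat) := if i < m then 2 ^ (m.-1 - i) else 1.

Lemma wt_sum_nat j d : d + j.+1 = m -> \sum_(d.+1 <= i < m.+1) wt i = wt d.
Proof.
elim: j d => [|j IH] d dm.
  have -> : d.+1 = m by lia.
  rewrite big_nat1 /wt ltnn.
  have -> : d < m by lia.
  by have -> : m.-1 - d = 0 by lia.
rewrite big_ltn; last by lia.
rewrite IH; last by lia.
rewrite /wt; have -> : d.+1 < m by lia. have -> : d < m by lia.
have -> : m.-1 - d = (m.-1 - d.+1).+1 by lia.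
by rewrite expnS mul2n addnn.
Qed.

Lemma wt_sum (d : 'I_m.+1) : d < m -> \sum_(i < m.+1 | d < i) wt i = wt d.
Proof.
move=> dm; rewrite -(wt_sum_nat (j := m - d.+1)); last by lia.
by rewrite big_geq_mkord; apply: eq_bigl.
Qed.

Definition Sw (u : V) := \sum_(i < m.+1) wt i * u i.
Definition cw (u : V) : 'I_p := Ordinal (ltn_pmod (Sw u) p0).

Lemma Sw_last u : Sw u = \sum_(i < m.+1 | i < L) wt i * u i + u L.
Proof.
rewrite /Sw (sum_split _ L) [X in _ + X]big_pred0; last by move=> i; have := ltn_ord i; rewrite /=; lia.
by rewrite /wt ltnn mul1n addn0.
Qed.

Lemma cw_neq (u v : V) : (forall i, i != L -> u i = v i) -> u L != v L -> cw u != cw v.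
Proof.
move=> same uv; rewrite -val_eqE /= !Sw_last.
have -> : \sum_(i < m.+1 | i < L) wt i * u i = \sum_(i < m.+1 | i < L) wt i * v i.
  apply: eq_bigr => i iL; rewrite same //; apply/negP => /eqP h; by rewrite h ltnn in iL.
rewrite eqn_modDl !modn_small //; by rewrite -val_eqE in uv.
Qed.

Lemma Sw_ext (u z : V) d : external e u z d -> Sw u = Sw z.
Proof.
case=> dm h2 h3 h4; rewrite /Sw !(sum_split _ d).
have -> : \sum_(i < m.+1 | i < d) wt i * u i = \sum_(i < m.+1 | i < d) wt i * z i.
  by apply: eq_bigr => i id; rewrite h2.
have -> : \sum_(i < m.+1 | d < i) wt i * u i = \sum_(i < m.+1 | d < i) wt i * z d.
  by apply: eq_bigr => i id; rewrite (proj1 (h4 i id)).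
have -> : \sum_(i < m.+1 | d < i) wt i * z i = \sum_(i < m.+1 | d < i) wt i * u d.
  by apply: eq_bigr => i id; rewrite (proj2 (h4 i id)).
rewrite -!big_distrl /= wt_sum //; lia.
Qed.

Lemma Kp_col : inj_col (sierp e m.+1) cw.
Proof.
have eirr : irreflexive e by move=> x; rewrite eE eqxx.
apply: (sierp_col eirr) => [z u v uv iu iv | z u v d eu iv].
  have [same uL] := internal_neq uv iu iv; exact: cw_neq.
have -> : cw u = cw z by apply/val_inj; rewrite /= (Sw_ext eu).
rewrite eq_sym; apply: cw_neq; first by move=> i iL; rewrite (proj1 iv).
by have := proj2 iv; rewrite eE.
Qed.

End Kp.

Lemma Kp_upper p (e : rel 'I_p) (eE : forall i j, e i j = (i != j)) m :
  0 < p -> chi_i (sierp e m.+1) <= p.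
Proof. move=> p0; apply: chi_i_le; exact: colP_has (Kp_col p0 eE m). Qed.

Lemma Kp_lower p (e : rel 'I_p) (eE : forall i j, e i j = (i != j)) :
  3 <= p -> p <= chi_i e.
Proof.
move=> p3; have [f Hf] := has_colP (chi_i_has e).
have finj : injective f.
  move=> u w fuw; apply/eqP; apply: contraT => uw.
  pose t := if (0 != (u : nat)) && (0 != (w : nat)) then 0 else if (1 != (u : nat)) && (1 != (w : nat)) then 1 else 2.
  have tlt : t < p by rewrite /t; case: ifP => _; [lia | case: ifP => _; lia].
  have := injP Hf uw (x := Ordinal tlt); rewrite !eE fuw eqxx; apply.
    by rewrite -val_eqE /= /t; case: ifP => h1; [lia | case: ifP => h2; lia].
  by rewrite -val_eqE /= /t; case: ifP => h1; [lia | case: ifP => h2; lia].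
by have := leq_card f finj; rewrite !card_ord.
Qed.

Lemma valE n (x : 'I_n) : val x = nat_of_ord x. Proof. by []. Qed.

Section Cyc.
Variable k : nat.
Hypothesis k3 : 3 <= k.
Notation e := (cycle_g k).

Lemma k0 : 0 < k. Proof. lia. Qed.

Lemma cyc_sym : symmetric e.
Proof. by move=> i j; rewrite /cycle_g orbC. Qed.

Lemma modS a : a < k -> a.+1 %% k = if a.+1 < k then a.+1 else 0.
Proof.
move=> ak; case: ifP => h; first by rewrite modn_small.
have -> : a.+1 = k by lia.
by rewrite modnn.
Qed.

Lemma mod2k x : x < k + k -> x %% k = if x < k then x else x - k.
Proof.
move=> xk; case: ifP => h; first by rewrite modn_small.
have {1}-> : x = (x - k) + k by lia.
by rewrite modnDr modn_small //; lia.
Qed.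

Lemma cyc_adj (x y : 'I_k) : e x y ->
  ((val x).+1 < k /\ val y = (val x).+1) \/ ((val x).+1 = k /\ val y = 0) \/
  ((val y).+1 < k /\ val x = (val y).+1) \/ ((val y).+1 = k /\ val x = 0).
Proof.
move=> exy; have hx : val x < k := ltn_ord x; have hy : val y < k := ltn_ord y.
case/orP: exy => /eqP h; move: h; rewrite modS //; case: ifP => h1 h2; lia.
Qed.

Lemma cyc_irr : irreflexive e.
Proof. move=> x; apply/negP => /cyc_adj; lia. Qed.

Lemma cyc_two (u w x : 'I_k) : u != w -> e u x -> e w x ->
  val w = (val u + 2) %% k \/ val u = (val w + 2) %% k.
Proof.
move=> uw /cyc_adj ux /cyc_adj wx.
have uw' : val u != val w by [].
have hu : val u < k := ltn_ord u; have hw : val w < k := ltn_ord w; have hx : val x < k := ltn_ord x.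
rewrite !mod2k; try lia.
case: ifP => h1; case: ifP => h2; lia.
Qed.

Lemma cyc_crit K (f : 'I_k -> 'I_K) :
  (forall a b : 'I_k, val b = (val a + 2) %% k -> f a != f b) -> inj_col e f.
Proof.
move=> H; apply: injI => u w x uw ux wx.
case: (cyc_two uw ux wx) => h; first exact: H.
by rewrite eq_sym; apply: H.
Qed.

Definition ordk (a : nat) : 'I_k := Ordinal (ltn_pmod a k0).

Lemma cyc_step K (f : 'I_k -> 'I_K) : inj_col e f -> forall a, f (ordk a) != f (ordk (a + 2)).
Proof.
move=> Hf a; apply: (injP Hf (x := ordk (a + 1))).
- rewrite -val_eqE /= -[a in a %% k]addn0 eqn_modDl mod0n modn_small //; lia.
- by rewrite /cycle_g /= -[(a %% k).+1]addn1 modnDml eqxx.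
- by rewrite /cycle_g /= -[((a + 1) %% k).+1]addn1 modnDml -addnA eqxx orbT.
Qed.


Lemma cyc_no2 K (f : 'I_k -> 'I_K) : k %% 4 != 0 -> K <= 2 -> inj_col e f -> False.
Proof.
move=> k4 K2 Hf.
pose v t := nat_of_ord (f (ordk (2 * t))).
have vlt t : v t <= 1 by have := ltn_ord (f (ordk (2 * t))); rewrite /v; lia.
have vS t : v t.+1 = 1 - v t.
  have := cyc_step Hf (2 * t); rewrite -val_eqE !valE -/(v t).
  have -> : 2 * t + 2 = 2 * t.+1 by lia.
  rewrite -/(v t.+1) => h; have := vlt t; have := vlt t.+1; lia.
have vT t : v t = if odd t then 1 - v 0 else v 0.
  elim: t => [|t IH] //=; rewrite vS IH; case: (odd t) => /=; have := vlt 0; lia.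
have [T [T0 oT]] : exists T, (2 * T) %% k = 0 /\ odd T.
  case/boolP: (odd k) => ok; first by exists k; rewrite modnMl.
  have hk := odd_double_half k; rewrite (negbTE ok) add0n -muln2 in hk.
  exists k./2; split; first by rewrite mulnC hk modnn.
  apply: contraT => oh; have hh := odd_double_half k./2.
  rewrite (negbTE oh) add0n -muln2 in hh.
  move: k4; rewrite -hk -hh; lia.
have : v T = v 0 by rewrite /v; congr (nat_of_ord (f _)); apply/val_inj; rewrite /= T0 muln0 mod0n.
rewrite vT oT; have := vlt 0; lia.
Qed.

Lemma cyc_ge3 : k %% 4 != 0 -> 3 <= chi_i e.
Proof.
move=> k4; rewrite leqNgt; apply/negP => h.
have [f Hf] := has_colP (chi_i_has e).
exact: (cyc_no2 (f := f) k4 _ Hf).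
Qed.

Lemma cyc_ge2 : 2 <= chi_i e.
Proof.
rewrite leqNgt; apply/negP => h.
have [f Hf] := has_colP (chi_i_has e).
have := cyc_step Hf 0; rewrite -val_eqE !valE.
have := ltn_ord (f (ordk 0)); have := ltn_ord (f (ordk (0 + 2))); lia.
Qed.

Lemma cyc_le2 : k %% 4 = 0 -> chi_i e <= 2.
Proof.
move=> k4; have d4 : 4 %| k by rewrite /dvdn k4.
have b x : x %% 4 %/ 2 < 2 by lia.
apply: chi_i_le; apply: (@colP_has _ _ _ (fun i : 'I_k => Ordinal (b (val i)))).
apply: cyc_crit => a c h; rewrite -val_eqE /= h (modn_dvdm _ d4) !valE; lia.
Qed.

End Cyc.

Definition hh (k t : nat) : nat :=
  if t == 0 then 0 else
  if (k %% 4 == 2) && (t + 3 == k) then 0 else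
  if (k %% 4 == 2) && (t + 1 == k) then 2 else
  if (k %% 4 == 3) && ((t + 3 == k) || (t + 4 == k)) then 0 else
  if (k %% 4 == 3) && ((t + 1 == k) || (t + 2 == k)) then 2 else
  if (t %% 4 == 1) || (t %% 4 == 2) then 1 else 2.

Lemma hh_lt3 k t : hh k t < 3.
Proof. by rewrite /hh; repeat case: ifP. Qed.

Lemma hh_vals k : 5 <= k -> k %% 4 != 0 ->
  [/\ hh k 0 = 0, hh k 1 = 1, hh k 2 = 1, (forall t, t + 1 = k -> hh k t = 2) &
      (forall t, t + 2 = k -> hh k t = 2)].
Proof.
move=> k5 k4; have : k %% 4 = 1 \/ k %% 4 = 2 \/ k %% 4 = 3 by lia.
case=> [er|[er|er]]; split; try move=> t ht; rewrite /hh er /=; repeat case: ifP; lia.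
Qed.

Lemma hhA_in k t : 5 <= k -> k %% 4 != 0 -> t + 2 < k -> hh k t != hh k (t + 2).
Proof.
move=> k5 k4 t2; rewrite /hh.
have : k %% 4 = 1 \/ k %% 4 = 2 \/ k %% 4 = 3 by lia.
case=> [er|[er|er]]; rewrite er /=; repeat case: ifP; lia.
Qed.

Lemma hhA k t : 5 <= k -> k %% 4 != 0 -> t < k -> hh k t != hh k ((t + 2) %% k).
Proof.
move=> k5 k4 tk; have [h0 h1 h2 hk1 hk2] := hh_vals k5 k4.
case: (ltnP (t + 2) k) => t2; first by rewrite modn_small //; exact: hhA_in.
have [e1|e2] : t + 1 = k \/ t + 2 = k by lia.
  have -> : t + 2 = k + 1 by lia.
  by rewrite modnDl modn_small ?h1 ?hk1 //; lia.
by rewrite e2 modnn h0 hk2.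
Qed.

Section Cyc5.
Variable k : nat.
Hypothesis k5 : 5 <= k.
Hypothesis k4 : k %% 4 != 0.
Notation e := (cycle_g k).
Let k3 : 3 <= k. Proof. lia. Qed.

Definition dl (a b : 'I_k) := (val b + k - val a) %% k.

Lemma dl_val a b : (val a <= val b /\ dl a b = val b - val a) \/
                   (val b < val a /\ dl a b = val b + k - val a).
Proof.
have ha : val a < k := ltn_ord a; have hb : val b < k := ltn_ord b.
rewrite /dl (mod2k (k := k)); [|lia|lia]; case: ifP; lia.
Qed.

Lemma dl_lt a b : dl a b < k.
Proof. exact: ltn_pmod (k0 k3). Qed.

Lemma dl_add x y w : dl x w = (dl x y + dl y w) %% k.
Proof.
have hx : val x < k := ltn_ord x; have hy : val y < k := ltn_ord y.
rewrite /dl modnDml modnDmr.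
have -> : val y + k - val x + (val w + k - val y) = (val w + k - val x) + k by lia.
by rewrite modnDr.
Qed.

Lemma dl_refl x : dl x x = 0.
Proof. by rewrite /dl addKn modnn. Qed.

Lemma dl2 b c : val c = (val b + 2) %% k -> dl b c = 2.
Proof.
move=> h; have hb : val b < k := ltn_ord b.
rewrite /dl h -addnBA; last by lia.
rewrite modnDml.
have -> : val b + 2 + (k - val b) = 2 + k by lia.
by rewrite modnDr modn_small.
Qed.

Lemma dl_shift a b c : val c = (val b + 2) %% k -> dl a c = (dl a b + 2) %% k.
Proof. by move=> h; rewrite (dl_add a b c) (dl2 h). Qed.

Lemma adj_dl x y : e x y -> (dl y x = k - 1 /\ dl x y = 1) \/ (dl y x = 1 /\ dl x y = k - 1).
Proof.
move/(cyc_adj k3) => H.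
have d1 := dl_val x y; have d2 := dl_val y x.
case: H => [[h1 h2]|[[h1 h2]|[[h1 h2]|[h1 h2]]]]; lia.
Qed.

Definition c5 (a b : 'I_k) : 'I_3 := Ordinal (hh_lt3 k (dl a b)).
Definition f5 (a : 'I_k) : 'I_3 := Ordinal (hh_lt3 k (val a)).

Lemma cyc5_upper m : chi_i (sierp e m.+1) <= 3.
Proof.
have [h0 h1 h2 hk1' hk2'] := hh_vals k5 k4.
have hk1 : hh k (k - 1) = 2 by apply: hk1'; lia.
have hk2 : hh k (k - 2) = 2 by apply: hk2'; lia.
have Hf : inj_col e f5.
  apply: cyc_crit => // a b h; rewrite -val_eqE /= h; exact: hhA.
have C1 : forall a b b' t, b != b' -> e b t -> e b' t -> c5 a b != c5 a b'.
  move=> a b b' t bb' bt b't; rewrite -val_eqE /=.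
  case: (cyc_two k3 bb' bt b't) => h.
    by rewrite (dl_shift a h); apply: hhA => //; exact: dl_lt.
  by rewrite (dl_shift a h) eq_sym; apply: hhA => //; exact: dl_lt.
have C2 : forall x y w, e x y -> e y w -> c5 y x != c5 x w.
  move=> x y w /adj_dl xy /adj_dl yw; rewrite -val_eqE /= (dl_add x y w).
  case: xy => [[-> ->]|[-> ->]]; case: yw => [[_ ->]|[_ ->]].
  - by rewrite hk1 modn_small // h2.
  - by rewrite subnKC ?modnn ?h0 ?hk1 //; lia.
  - by rewrite subnK ?modnn ?h0 ?h1 //; lia.
  - have -> : k - 1 + (k - 1) = (k - 2) + k by lia.
    by rewrite modnDr modn_small ?hk2 ?h1 //; lia.
have C3 : forall x y w, e x y -> e y w -> c5 x x != c5 y w.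
  move=> x y w _ /adj_dl yw; rewrite -val_eqE /= dl_refl.
  by case: yw => [[_ ->]|[_ ->]]; rewrite ?h0 ?h1 ?hk1.
have H := c2_col (cyc_sym (k := k)) (cyc_irr k3) m Hf C1 C2 C3.
apply: chi_i_le; exact: colP_has H.
Qed.

End Cyc5.

Lemma cyc3E (i j : 'I_3) : cycle_g 3 i j = (i != j).
Proof. by case: i => [[|[|[|?]]] ?]; case: j => [[|[|[|?]]] ?]. Qed.

Lemma deg3 k m : 3 <= k -> 0 < m -> 3 <= chi_i (sierp (cycle_g k) m.+1).
Proof.
move=> k3 m0; have [g Hg] := has_colP (chi_i_has (sierp (cycle_g k) m.+1)).
have l0 : 0 < k by lia. have l1 : 1 < k by lia. have l2 : 2 < k by lia.
pose o0 : 'I_k := Ordinal l0. pose o1 : 'I_k := Ordinal l1. pose o2 : 'I_k := Ordinal l2.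
have dlt : m.-1 < m.+1 by lia.
pose d : 'I_m.+1 := Ordinal dlt.
pose z : {ffun 'I_m.+1 -> 'I_k} := [ffun i => if i == ord_max then o1 else o0].
pose u1 : {ffun 'I_m.+1 -> 'I_k} := [ffun i => o0].
pose u2 : {ffun 'I_m.+1 -> 'I_k} := [ffun i => if i == ord_max then o2 else o0].
pose u3 : {ffun 'I_m.+1 -> 'I_k} := [ffun i => if i == ord_max then o0 else if i == d then o1 else o0].
have dL : (d == ord_max) = false by rewrite -val_eqE /=; lia.
have m1 : 1 %% k = 1 by rewrite modn_small.
have m2 : 2 %% k = 2 by rewrite modn_small.
have vlt : forall i : 'I_m.+1, i < (@ord_max m) -> (i == ord_max) = false.
  by move=> i hi; apply: negbTE; rewrite -val_eqE neq_ltn hi.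
have nogt : forall i : 'I_m.+1, (@ord_max m) < i -> False.
  by move=> i hi; have := ltn_ord i; rewrite /= in hi; lia.
have E1 : sierp (cycle_g k) m.+1 u1 z.
  apply/existsP; exists ord_max; rewrite !ffunE eqxx /cycle_g /= m1 eqxx /=.
  apply/andP; split; apply/forallP => i; apply/implyP => hi; last by case: (nogt _ hi).
  by rewrite !ffunE vlt.
have E2 : sierp (cycle_g k) m.+1 u2 z.
  apply/existsP; exists ord_max; rewrite !ffunE eqxx /cycle_g /= m2 eqxx orbT /=.
  apply/andP; split; apply/forallP => i; apply/implyP => hi; last by case: (nogt _ hi).
  by rewrite !ffunE vlt.
have E3 : sierp (cycle_g k) m.+1 u3 z.
  apply/existsP; exists d; rewrite !ffunE dL eqxx /cycle_g /= m1 eqxx orbT /=.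
  apply/andP; split; apply/forallP => i; apply/implyP => hi; rewrite !ffunE.
    have iL : (i == ord_max) = false by rewrite -val_eqE /=; rewrite /= in hi; lia.
    have id : (i == d) = false by rewrite -val_eqE /=; rewrite /= in hi; lia.
    by rewrite iL id.
  have iL : i = ord_max by apply/val_inj => /=; have := ltn_ord i; rewrite /= in hi; lia.
  by rewrite iL !eqxx ?dL ?eqxx.
have n12 : u1 != u2.
  by apply/eqP => /(congr1 (fun f : {ffun 'I_m.+1 -> 'I_k} => f ord_max)); rewrite !ffunE eqxx.
have n13 : u1 != u3.
  by apply/eqP => /(congr1 (fun f : {ffun 'I_m.+1 -> 'I_k} => f d)); rewrite !ffunE dL eqxx.
have n23 : u2 != u3.
  by apply/eqP => /(congr1 (fun f : {ffun 'I_m.+1 -> 'I_k} => f ord_max)); rewrite !ffunE eqxx.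
have := injP Hg n12 E1 E2; have := injP Hg n13 E1 E3; have := injP Hg n23 E2 E3.
rewrite -!val_eqE !valE.
have := ltn_ord (g u1); have := ltn_ord (g u2); have := ltn_ord (g u3).
lia.
Qed.

Theorem mainTheorem4 :
  (forall (T : finType) (e : rel T), symmetric e -> irreflexive e ->
     forall n : nat, 0 < n ->
       chi_i e <= chi_i (sierp e n) <= (chi_i e).+1)
  /\ (forall p n : nat, 3 <= p -> 0 < n ->
        chi_i (sierp (complete_g p) n) = chi_i (complete_g p))
  /\ (forall k n : nat, 3 <= k -> k %% 4 != 0 -> 0 < n ->
        chi_i (sierp (cycle_g k) n) = chi_i (cycle_g k))
  /\ (forall k n : nat, 3 <= k -> k %% 4 = 0 -> 2 <= n ->
        chi_i (sierp (cycle_g k) n) = (chi_i (cycle_g k)).+1).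
Proof.
split; [|split; [|split]].
- move=> T e es ei [|m] // _; apply/andP; split; [exact: part1_lower | exact: part1_upper].
- move=> p [|m] // p3 _; apply/eqP; rewrite eqn_leq part1_lower andbT.
  have eE : forall i j : 'I_p, complete_g p i j = (i != j) by [].
  apply: leq_trans (Kp_upper eE m _) (Kp_lower eE p3); lia.
- move=> k [|m] // k3 k4 _; apply/eqP; rewrite eqn_leq part1_lower andbT.
  apply: leq_trans _ (cyc_ge3 k3 k4).
  have [->|k5] : k = 3 \/ 5 <= k by lia.
    exact: Kp_upper cyc3E m _.
  exact: cyc5_upper.
- move=> k [|m] // k3 k4 n2.
  have c2 : chi_i (cycle_g k) = 2 by apply/eqP; rewrite eqn_leq cyc_le2 // cyc_ge2.
  rewrite c2; apply/eqP; rewrite eqn_leq.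
  have := part1_upper (cyc_sym (k := k)) (cyc_irr k3) m; rewrite c2 => ->.
  by rewrite deg3 //; lia.
Qed.
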